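(* Let $1\le r\le\infty$ and define, for nonzero closed convex cones $P,Q\subseteq\mathbb R^n$, ${\rm Dis}_r(P,Q):={\rm dis}_r(P\cap S_n,Q\cap S_n)$. Then ${\rm Dis}_r$ is a distance on the set of nonzero closed convex cones of $\mathbb R^n$, and $${\rm Dis}_r(P,Q)=2\left\|\left(\sin\left[\tfrac{\Theta(P,Q)}{2}\right],\ \sin\left[\tfrac{\Theta(Q,P)}{2}\right]\right)\right\|_r .$$ In particular $\Lambda(P\cap S_n,Q\cap S_n)=2\sin[\Theta(P,Q)/2]$.
   Context: $S_n:=\{u\in\mathbb R^n:\|u\|=1\}$. For nonempty compact $C,D\subseteq\mathbb R^n$: $\mathtt d_D(x):=\min_{y\in D}\|x-y\|$, $\Lambda(C,D):=\max_{x\in C}\mathtt d_D(x)$, and ${\rm dis}_r(C,D):=\|(\Lambda(C,D),\Lambda(D,C))\|_r$, with $\|\cdot\|_r$ the $\ell^r$-norm on $\mathbb R^2$. For nonzero closed convex cones $P,Q$, $\Theta(P,Q):=\max_{u\in P\cap S_n}\min_{v\in Q\cap S_n}\arccos\langle u,v\rangle$. *)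

(* Defs.v *)
From HB Require Import structures.
From mathcomp Require Import all_boot all_order all_algebra.
From mathcomp Require Import all_classical all_reals all_analysis.
Set Implicit Arguments. Unset Strict Implicit. Unset Printing Implicit Defensive.
Import Order.TTheory GRing.Theory Num.Theory.
Import numFieldNormedType.Exports.
Local Open Scope classical_set_scope.
Local Open Scope ring_scope.

Section Defs.
Variables (R : realType) (n : nat).
Implicit Types (x y u v : 'rV[R]_n) (C D P Q : set 'rV[R]_n).

Definition dotp u v : R := \sum_(i < n) u 0 i * v 0 i.
Definition enorm x : R := Num.sqrt (dotp x x).

Definition sphere : set 'rV[R]_n := [set u | enorm u = 1].

(* d_D(x) = min_{y in D} ||x - y||  (min = inf on nonempty compact D) *)
Definition distto D x : R := inf [set enorm (x - y) | y in D].

Definition Lambda C D : R := sup [set distto D x | x in C].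

Definition lrnorm (r : \bar R) (a b : R) : R :=
  match r with
  | +oo%E => Num.max `|a| `|b|
  | r'%:E => powR (powR `|a| r' + powR `|b| r') r'^-1
  | -oo%E => 0
  end.

Definition dis r C D : R := lrnorm r (Lambda C D) (Lambda D C).

Definition Dis r P Q : R := dis r (P `&` sphere) (Q `&` sphere).

Definition Theta P Q : R :=
  sup [set inf [set acos (dotp u v) | v in Q `&` sphere] | u in P `&` sphere].

Definition nzccone P : Prop :=
  [/\ closed P,
      (forall x y (t : R), P x -> P y -> 0 <= t <= 1 -> P (t *: x + (1 - t) *: y)),
      (forall x (t : R), P x -> 0 <= t -> P (t *: x)) &
      (exists x, P x /\ x != 0)].

End Defs.

(* Main.v *)
Require Import Defs.
From HB Require Import structures.
From mathcomp Require Import all_boot all_order all_algebra.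
From mathcomp Require Import all_classical all_reals all_analysis.
From mathcomp Require Import ring lra.
Import Order.TTheory GRing.Theory Num.Theory.
Import numFieldNormedType.Exports.
Local Open Scope classical_set_scope.
Local Open Scope ring_scope.
Set Implicit Arguments. Unset Strict Implicit. Unset Printing Implicit Defensive.
Section Dot.
Variables (R : realType) (n : nat).
Implicit Types (x y z u v : 'rV[R]_n).

Lemma dotpC x y : dotp x y = dotp y x.
Proof. by apply: eq_bigr => i _; rewrite mulrC. Qed.

Lemma dotpDl x y z : dotp (x + y) z = dotp x z + dotp y z.
Proof. by rewrite /dotp -big_split; apply: eq_bigr => i _; rewrite !mxE mulrDl. Qed.

Lemma dotpZl (a : R) x z : dotp (a *: x) z = a * dotp x z.
Proof. by rewrite /dotp mulr_sumr; apply: eq_bigr => i _; rewrite !mxE mulrA. Qed.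

Lemma dotpNl x z : dotp (- x) z = - dotp x z.
Proof. by rewrite -scaleN1r dotpZl mulN1r. Qed.

Lemma dotpBl x y z : dotp (x - y) z = dotp x z - dotp y z.
Proof. by rewrite dotpDl dotpNl. Qed.

Lemma dotpDr x y z : dotp z (x + y) = dotp z x + dotp z y.
Proof. by rewrite dotpC dotpDl !(dotpC z). Qed.
Lemma dotpBr x y z : dotp z (x - y) = dotp z x - dotp z y.
Proof. by rewrite dotpC dotpBl !(dotpC z). Qed.
Lemma dotpZr (a : R) x z : dotp z (a *: x) = a * dotp z x.
Proof. by rewrite dotpC dotpZl dotpC. Qed.

Lemma dotp_ge0 x : 0 <= dotp x x.
Proof. by apply: sumr_ge0 => i _; rewrite -expr2 sqr_ge0. Qed.

Lemma dotp_eq0 x : dotp x x = 0 -> x = 0.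
Proof.
move/eqP; rewrite psumr_eq0 => [/allP H|i _]; last by rewrite -expr2 sqr_ge0.
apply/rowP => i; rewrite mxE; have := H i (mem_index_enum i).
by rewrite -expr2 sqrf_eq0 => /eqP.
Qed.

Lemma enorm_ge0 x : 0 <= enorm x.
Proof. exact: sqrtr_ge0. Qed.

Lemma enorm_sqr x : enorm x ^+ 2 = dotp x x.
Proof. by rewrite sqr_sqrtr // dotp_ge0. Qed.

Lemma dotp0l x : dotp 0 x = 0.
Proof. by rewrite /dotp big1 // => i _; rewrite mxE mul0r. Qed.

Lemma cauchy_schwarz x y : dotp x y <= enorm x * enorm y.
Proof.
set a := enorm x; set b := enorm y.
have a0 : 0 <= a := enorm_ge0 x; have b0 : 0 <= b := enorm_ge0 y.
have [a_eq0|a_neq0] := eqVneq a 0.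
  have : dotp x x = 0 by rewrite -enorm_sqr -/a a_eq0 expr0n.
  by move/dotp_eq0 => ->; rewrite dotp0l mulr_ge0.
have [b_eq0|b_neq0] := eqVneq b 0.
  have : dotp y y = 0 by rewrite -enorm_sqr -/b b_eq0 expr0n.
  by move/dotp_eq0 => ->; rewrite dotpC dotp0l mulr_ge0.
have H := dotp_ge0 (b *: x - a *: y).
rewrite !(dotpBl, dotpBr, dotpZl, dotpZr) -!enorm_sqr -/a -/b (dotpC y x) in H.
have ab : 0 < a * b by rewrite mulr_gt0 // lt_neqAle eq_sym ?a_neq0 ?b_neq0.
nra.
Qed.

Lemma enormD x y : enorm (x + y) <= enorm x + enorm y.
Proof.
rewrite -(ger0_norm (addr_ge0 (enorm_ge0 x) (enorm_ge0 y))) -sqrtr_sqr.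
rewrite /enorm ler_sqrt ?sqr_ge0 // dotpDl !dotpDr -!/(enorm _) (dotpC y x).
have := cauchy_schwarz x y; rewrite -[dotp x x]enorm_sqr -[dotp y y]enorm_sqr.
nra.
Qed.

Lemma enormN x : enorm (- x) = enorm x.
Proof. by rewrite /enorm dotpNl dotpC dotpNl opprK. Qed.

Lemma enormB x y : enorm (x - y) = enorm (y - x).
Proof. by rewrite -enormN opprB. Qed.

Lemma enormZ (a : R) x : enorm (a *: x) = `|a| * enorm x.
Proof.
rewrite /enorm dotpZl dotpZr mulrA -expr2 sqrtrM ?sqr_ge0 //.
by rewrite sqrtr_sqr.
Qed.

End Dot.
Section LR.
Variable R : realType.
Implicit Types (a b c d p : R).

Lemma conv_ineq (p l x y : R) : 1 <= p -> 0 <= l -> l <= 1 -> 0 <= x -> 0 <= y ->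
  powR (l * x + (1 - l) * y) p <= l * powR x p + (1 - l) * powR y p.
Proof.
move=> p1 l0 l1 x0 y0.
have := (@convex_powR R p p1 (Itv01 l0 l1) x y).
rewrite !inE /= !in_itv /= x0 y0 /= => /(_ isT isT).
by rewrite !convRE /=.
Qed.

Lemma powRK p x : 0 < p -> 0 <= x -> powR (powR x p^-1) p = x.
Proof.
move=> p0 x0; rewrite -powRrM mulVf ?gt_eqF // powRr1 //.
Qed.

Lemma powRK' p x : 0 < p -> 0 <= x -> powR (powR x p) p^-1 = x.
Proof.
move=> p0 x0; rewrite -powRrM mulfV ?gt_eqF // powRr1 //.
Qed.

Lemma powR_sum_eq0 p a b : 0 < p -> 0 <= a -> 0 <= b ->
  powR (powR a p + powR b p) p^-1 = 0 -> a = 0 /\ b = 0.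
Proof.
move=> p0 a0 b0 /powR_eq0_eq0 /eqP.
rewrite paddr_eq0 ?powR_ge0 // => /andP[/eqP/powR_eq0_eq0 -> /eqP/powR_eq0_eq0 ->].
by [].
Qed.

Lemma mink_core p a b c d A C : 1 <= p -> 0 <= a -> 0 <= b -> 0 <= c -> 0 <= d ->
  0 < A -> 0 < C -> powR A p = powR a p + powR b p -> powR C p = powR c p + powR d p ->
  powR (a + c) p + powR (b + d) p <= powR (A + C) p.
Proof.
move=> p1 a0 b0 c0 d0 Ap Cp PA PC.
have PAp : 0 < powR A p := powR_gt0 _ Ap.
have PCp : 0 < powR C p := powR_gt0 _ Cp.
have ACp : 0 < A + C by rewrite addr_gt0.
pose l := A / (A + C).
have l0 : 0 <= l by rewrite divr_ge0 // ltW.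
have l1 : l <= 1 by rewrite ler_pdivrMr // mul1r lerDl ltW.
have key : forall x y, 0 <= x -> 0 <= y ->
  powR (x + y) p <= powR (A + C) p * (l * (powR x p / powR A p) + (1 - l) * (powR y p / powR C p)).
  move=> x y x0 y0.
  have E : x + y = (A + C) * (l * (x / A) + (1 - l) * (y / C)).
    rewrite /l; field.
    by rewrite !gt_eqF.
  have hA : powR (x / A) p = powR x p / powR A p.
    apply: (@mulIf _ (powR A p)); first by rewrite gt_eqF.
    by rewrite -powRM ?divr_ge0 ?(ltW Ap) // !divfK // gt_eqF.
  have hC : powR (y / C) p = powR y p / powR C p.
    apply: (@mulIf _ (powR C p)); first by rewrite gt_eqF.
    by rewrite -powRM ?divr_ge0 ?(ltW Cp) // !divfK // gt_eqF.
  have Sg : 0 <= l * (x / A) + (1 - l) * (y / C).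
    by rewrite addr_ge0 // mulr_ge0 ?divr_ge0 ?subr_ge0 // ltW.
  rewrite -hA -hC E powRM ?(ltW ACp) //.
  rewrite ler_pM2l ?powR_gt0 //.
  by apply: conv_ineq; rewrite // divr_ge0 // ltW.
apply: le_trans (lerD (key _ _ a0 c0) (key _ _ b0 d0)) _.
rewrite -mulrDr ler_piMr ?powR_ge0 // PA PC.
have hX : powR a p + powR b p != 0 by rewrite -PA gt_eqF.
have hZ : powR c p + powR d p != 0 by rewrite -PC gt_eqF.
move: hX hZ; clearbody l.
move: (powR a p) (powR b p) (powR c p) (powR d p) => X Y Z W hX hZ.
have -> : l * (X / (X + Y)) + (1 - l) * (Z / (Z + W)) +
  (l * (Y / (X + Y)) + (1 - l) * (W / (Z + W))) =
  l * ((X + Y) / (X + Y)) + (1 - l) * ((Z + W) / (Z + W)).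
  by rewrite !mulrDl; ring.
by rewrite !divff // !mulr1 addrCA subrr addr0.
Qed.

Lemma mink p a b c d : 1 <= p -> 0 <= a -> 0 <= b -> 0 <= c -> 0 <= d ->
  powR (powR (a + c) p + powR (b + d) p) p^-1 <=
  powR (powR a p + powR b p) p^-1 + powR (powR c p + powR d p) p^-1.
Proof.
move=> p1 a0 b0 c0 d0; have p0 : 0 < p by apply: lt_le_trans p1.
have [Ae0|An0] := eqVneq (powR (powR a p + powR b p) p^-1) 0.
  have [ea eb] := powR_sum_eq0 p0 a0 b0 Ae0.
  by rewrite Ae0 ea eb !add0r.
have [Ce0|Cn0] := eqVneq (powR (powR c p + powR d p) p^-1) 0.
  have [ec ed] := powR_sum_eq0 p0 c0 d0 Ce0.
  by rewrite Ce0 ec ed !addr0.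
have Ap : 0 < powR (powR a p + powR b p) p^-1 by rewrite lt_neqAle eq_sym An0 powR_ge0.
have Cp : 0 < powR (powR c p + powR d p) p^-1 by rewrite lt_neqAle eq_sym Cn0 powR_ge0.
have S := mink_core p1 a0 b0 c0 d0 Ap Cp (powRK p0 (addr_ge0 (powR_ge0 _ _) (powR_ge0 _ _)))
  (powRK p0 (addr_ge0 (powR_ge0 _ _) (powR_ge0 _ _))).
apply: le_trans (ge0_ler_powR _ _ _ S) _.
- by rewrite invr_ge0 ltW.
- by rewrite nnegrE addr_ge0 ?powR_ge0.
- by rewrite nnegrE powR_ge0.
by rewrite powRK' ?addr_ge0 ?powR_ge0.
Qed.
End LR.
Section Dist.
Variables (R : realType) (n : nat).
Implicit Types (x y z u v : 'rV[R]_n) (A B C D : set 'rV[R]_n).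

Lemma enorm0 : enorm (0 : 'rV[R]_n) = 0.
Proof. by rewrite /enorm dotp0l sqrtr0. Qed.

Lemma sphere_dot u : sphere u -> dotp u u = 1.
Proof. by rewrite /sphere /= => H; rewrite -enorm_sqr H expr1n. Qed.

Lemma sphere_dot_le1 u v : sphere u -> sphere v -> dotp u v <= 1.
Proof.
move=> hu hv; have := cauchy_schwarz u v; by rewrite hu hv mulr1.
Qed.

Lemma sphere_dot_geN1 u v : sphere u -> sphere v -> -1 <= dotp u v.
Proof.
move=> hu hv; have := cauchy_schwarz u (- v).
by rewrite enormN hu hv mulr1 dotpC dotpNl dotpC lerNl.
Qed.

Lemma sphere_dist2 u v : sphere u -> sphere v ->
  enorm (u - v) ^+ 2 = 2 - 2 * dotp u v.
Proof.
move=> hu hv; rewrite enorm_sqr dotpBl !dotpBr (dotpC v u) !sphere_dot //.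
lra.
Qed.

Lemma sphere_dist_le2 u v : sphere u -> sphere v -> enorm (u - v) <= 2.
Proof.
move=> hu hv; have := enormD u (- v); rewrite enormN hu hv => H.
exact: le_trans H _.
Qed.

Lemma distto_has_inf D x : D !=set0 -> has_inf [set enorm (x - y) | y in D].
Proof.
move=> [y Dy]; split; first by exists (enorm (x - y)), y.
by exists 0 => _ [z _ <-]; exact: enorm_ge0.
Qed.

Lemma distto_le D x y : D y -> distto D x <= enorm (x - y).
Proof.
move=> Dy; apply: (ge_inf (distto_has_inf x (ex_intro _ y Dy)).2).
by exists y.
Qed.

Lemma distto_ge0 D x : D !=set0 -> 0 <= distto D x.
Proof.
move=> [y Dy]; apply: lb_le_inf; first by exists (enorm (x - y)), y.
by move=> _ [z _ <-]; exact: enorm_ge0.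
Qed.

Lemma distto_tri D x y : D !=set0 -> distto D x <= enorm (x - y) + distto D y.
Proof.
move=> [w Dw]; rewrite -lerBlDl; apply: lb_le_inf; first by exists (enorm (y - w)), w.
move=> _ [z Dz <-]; rewrite lerBlDl.
apply: le_trans (distto_le x Dz) _.
by have := enormD (x - y) (y - z); rewrite addrA subrK.
Qed.

Lemma distto_adherent D x e : D !=set0 -> 0 < e ->
  exists2 y, D y & enorm (x - y) < distto D x + e.
Proof.
move=> D0 e0; have [_ [y Dy <-] H] := inf_adherent e0 (distto_has_inf x D0).
by exists y.
Qed.

Definition onS A := forall x, A x -> sphere x.

Lemma Lambda_has_sup C D : C !=set0 -> D !=set0 -> onS C -> onS D ->
  has_sup [set distto D x | x in C].
Proof.
move=> [x Cx] [y Dy] hC hD; split; first by exists (distto D x), x.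
exists 2 => _ [z Cz <-].
apply: le_trans (distto_le z Dy) _; exact: sphere_dist_le2 (hC _ Cz) (hD _ Dy).
Qed.

Lemma Lambda_ge C D x : C !=set0 -> D !=set0 -> onS C -> onS D -> C x ->
  distto D x <= Lambda C D.
Proof.
move=> C0 D0 hC hD Cx; apply: (sup_upper_bound (Lambda_has_sup C0 D0 hC hD)).
by exists x.
Qed.

Lemma Lambda_le C D M : C !=set0 -> (forall x, C x -> distto D x <= M) ->
  Lambda C D <= M.
Proof.
move=> [x Cx] H; apply: ge_sup; first by exists (distto D x), x.
by move=> _ [z Cz <-]; exact: H.
Qed.

Lemma Lambda_ge0 C D : C !=set0 -> D !=set0 -> onS C -> onS D -> 0 <= Lambda C D.
Proof.
move=> C0 D0 hC hD; have [x Cx] := C0.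
exact: le_trans (distto_ge0 x D0) (Lambda_ge C0 D0 hC hD Cx).
Qed.

Lemma Lambda_tri A B C : A !=set0 -> B !=set0 -> C !=set0 ->
  onS A -> onS B -> onS C -> Lambda A C <= Lambda A B + Lambda B C.
Proof.
move=> A0 B0 C0 hA hB hC; apply: Lambda_le => // x Ax.
rewrite -lerBlDr.
apply: le_trans (Lambda_ge A0 B0 hA hB Ax).
have [w Bw] := B0.
apply: lb_le_inf; first by exists (enorm (x - w)), w.
move=> _ [y By <-]; rewrite lerBlDr.
apply: le_trans (distto_tri x y C0) _.
by rewrite lerD2l; apply: Lambda_ge.
Qed.

Lemma Lambda_self A : A !=set0 -> onS A -> Lambda A A = 0.
Proof.
move=> A0 hA; apply/eqP; rewrite eq_le Lambda_ge0 // andbT.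
apply: Lambda_le => // x Ax.
by apply: le_trans (distto_le x Ax) _; rewrite subrr enorm0.
Qed.

Lemma mx_norm_le_enorm x : `|x| <= enorm x.
Proof.
have -> : `|x| = mx_norm x by [].
rewrite mx_normrE; apply: bigmax_le; first exact: enorm_ge0.
move=> [i j] _ /=; rewrite (ord1 i).
rewrite -(ger0_norm (enorm_ge0 x)) -ler_sqr ?nnegrE ?normr_ge0 //.
rewrite !real_normK ?num_real // enorm_sqr /dotp (bigD1 j) //= -expr2 lerDl.
by apply: sumr_ge0 => k _; rewrite -expr2 sqr_ge0.
Qed.

Lemma Lambda_eq0 A B B' : A !=set0 -> B !=set0 -> onS A -> onS B -> B `<=` B' -> closed B' ->
  Lambda A B = 0 -> A `<=` B'.
Proof.
move=> A0 B0 hA hB BB' cB L0 x Ax; apply: cB => U /nbhs_ballP [e e0 hU].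
have d0 : distto B x = 0.
  apply/eqP; rewrite eq_le distto_ge0 // andbT -L0; exact: Lambda_ge.
have [y By hy] := distto_adherent x B0 e0.
exists y; split; first exact: BB'.
apply: hU; rewrite mx_norm_ball /ball_ /=.
by apply: le_lt_trans (mx_norm_le_enorm _) _; rewrite d0 add0r in hy.
Qed.

End Dist.
Section Trig.
Variable (R : realType).
Implicit Types (x y t s : R) (S : set R).

Definition gf x : R := Num.sqrt (2 - 2 * cos x).
Definition hf y : R := acos (1 - y ^+ 2 / 2).

Lemma cos_antitone x y : 0 <= x <= pi -> 0 <= y <= pi -> x <= y -> cos y <= cos x.
Proof.
move=> hx hy; rewrite le_eqVlt => /orP[/eqP->//|xy].
apply: ltW; have := @ltr_cos R x y; rewrite !in_itv /= => /(_ hx hy) ->.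
done.
Qed.

Lemma gf_mono x y : 0 <= x <= pi -> 0 <= y <= pi -> x <= y -> gf x <= gf y.
Proof.
move=> hx hy xy; rewrite /gf ler_sqrt; last first.
  by have := cos_le1 y; lra.
by have := cos_antitone hx hy xy; lra.
Qed.

Lemma gf_ge0 x : 0 <= gf x.
Proof. exact: sqrtr_ge0. Qed.

Lemma gf_le2 x : gf x <= 2.
Proof.
rewrite /gf -[leRHS](@ger0_norm _ 2) // -[leRHS]sqrtr_sqr ler_sqrt ?sqr_ge0 //.
by have := cos_geN1 x; lra.
Qed.

Lemma acos_antitone (a b : R) : -1 <= a <= 1 -> -1 <= b <= 1 -> a <= b -> acos b <= acos a.
Proof.
move=> ha hb ab; rewrite leNgt; apply/negP => H.
have ia : acos a \in `[0, pi] by rewrite in_itv /= acos_ge0 // acos_lepi.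
have ib : acos b \in `[0, pi] by rewrite in_itv /= acos_ge0 // acos_lepi.
have := @ltr_cos R _ _ ia ib; rewrite H !acosK ?in_itv //= => /esym.
by rewrite ltNge ab.
Qed.

Lemma hf_range y : 0 <= y <= 2 -> 0 <= hf y <= pi.
Proof.
move=> hy; have h : -1 <= 1 - y ^+ 2 / 2 <= 1 by apply/andP; split; nra.
by rewrite acos_ge0 // acos_lepi.
Qed.

Lemma hf_mono x y : 0 <= x <= 2 -> 0 <= y <= 2 -> x <= y -> hf x <= hf y.
Proof.
move=> hx hy xy; apply: acos_antitone; try (apply/andP; split; nra).
nra.
Qed.

Lemma gf_hf y : 0 <= y <= 2 -> gf (hf y) = y.
Proof.
move=> hy; have h : -1 <= 1 - y ^+ 2 / 2 <= 1 by apply/andP; split; nra.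
rewrite /gf /hf acosK ?in_itv //.
have -> : 2 - 2 * (1 - y ^+ 2 / 2) = y ^+ 2 by field.
by rewrite sqrtr_sqr ger0_norm //; case/andP: hy.
Qed.

Lemma hf_gf x : 0 <= x <= pi -> hf (gf x) = x.
Proof.
move=> hx; rewrite /hf /gf sqr_sqrtr; last by have := cos_le1 x; lra.
have -> : 1 - (2 - 2 * cos x) / 2 = cos x by field.
by rewrite cosK // in_itv.
Qed.

Lemma gf_acos t : -1 <= t <= 1 -> gf (acos t) = Num.sqrt (2 - 2 * t).
Proof. by move=> ht; rewrite /gf acosK // in_itv. Qed.

Lemma gf_sin x : 0 <= x <= pi -> gf x = 2 * sin (x / 2).
Proof.
move=> hx.
have hc : cos x = 1 - 2 * sin (x / 2) ^+ 2.
  set y := x / 2; have -> : x = y + y by rewrite /y; field.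
  by rewrite cosD; have := cos2Dsin2 y; rewrite !expr2; lra.
rewrite /gf hc.
have -> : 2 - 2 * (1 - 2 * sin (x / 2) ^+ 2) = (2 * sin (x / 2)) ^+ 2 by field.
rewrite sqrtr_sqr ger0_norm // mulr_ge0 // sin_ge0_pi //.
case/andP: hx => h1 h2; apply/andP; split; first lra.
have := pi_ge0 R; lra.
Qed.

Lemma inf_gf S : S !=set0 -> (forall s, S s -> 0 <= s <= pi) ->
  inf (gf @` S) = gf (inf S).
Proof.
move=> S0 hS; have [s0 Ss0] := S0.
have hI : 0 <= inf S <= pi.
  apply/andP; split; first by apply: lb_le_inf => // s /hS /andP[].
  apply: le_trans (ge_inf _ Ss0) _; first by exists 0 => s /hS /andP[].
  by case/andP: (hS _ Ss0).
have gS0 : gf @` S !=set0 by exists (gf s0), s0.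
have hM : 0 <= inf (gf @` S) <= 2.
  apply/andP; split; first by apply: lb_le_inf => // _ [s _ <-]; exact: gf_ge0.
  apply: le_trans (ge_inf _ _) (gf_le2 s0); first by exists 0 => _ [s _ <-]; exact: gf_ge0.
  by exists s0.
apply/eqP; rewrite eq_le; apply/andP; split.
  rewrite -(gf_hf hM); apply: gf_mono => //; first exact: hf_range.
  apply: lb_le_inf => // s Ss; rewrite -(hf_gf (hS _ Ss)).
  apply: hf_mono => //; first by rewrite gf_ge0 gf_le2.
  by apply: ge_inf; [exists 0 => _ [z _ <-]; exact: gf_ge0 | exists s].
apply: lb_le_inf => // _ [s Ss <-]; apply: gf_mono => //; first exact: hS.
by apply: ge_inf => //; exists 0 => z /hS /andP[].
Qed.

Lemma sup_gf S : S !=set0 -> (forall s, S s -> 0 <= s <= pi) ->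
  sup (gf @` S) = gf (sup S).
Proof.
move=> S0 hS; have [s0 Ss0] := S0.
have hsS : has_sup S by split => //; exists pi => s /hS /andP[].
have hI : 0 <= sup S <= pi.
  apply/andP; split; last by apply: ge_sup => // s /hS /andP[].
  apply: le_trans (sup_upper_bound hsS Ss0); by case/andP: (hS _ Ss0).
have gS0 : gf @` S !=set0 by exists (gf s0), s0.
have hgS : has_sup (gf @` S) by split => //; exists 2 => _ [s _ <-]; exact: gf_le2.
have hM : 0 <= sup (gf @` S) <= 2.
  apply/andP; split; last by apply: ge_sup => // _ [s _ <-]; exact: gf_le2.
  apply: le_trans (sup_upper_bound hgS _); first exact: (gf_ge0 s0).
  by exists s0.
apply/eqP; rewrite eq_le; apply/andP; split.
  apply: ge_sup => // _ [s Ss <-]; apply: gf_mono => //; first exact: hS.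
  exact: sup_upper_bound.
rewrite -(gf_hf hM); apply: gf_mono => //; first exact: hf_range.
apply: ge_sup => // s Ss; rewrite -(hf_gf (hS _ Ss)).
apply: hf_mono => //; first by rewrite gf_ge0 gf_le2.
by apply: sup_upper_bound => //; exists s.
Qed.


Lemma inf_range S : S !=set0 -> (forall s, S s -> 0 <= s <= pi) -> 0 <= inf S <= pi.
Proof.
move=> S0 hS; have [s0 Ss0] := S0.
apply/andP; split; first by apply: lb_le_inf => // s /hS /andP[].
apply: le_trans (ge_inf _ Ss0) _; first by exists 0 => s /hS /andP[].
by case/andP: (hS _ Ss0).
Qed.

Lemma sup_range S : S !=set0 -> (forall s, S s -> 0 <= s <= pi) -> 0 <= sup S <= pi.
Proof.
move=> S0 hS; have [s0 Ss0] := S0.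
have hsS : has_sup S by split => //; exists pi => s /hS /andP[].
apply/andP; split; last by apply: ge_sup => // s /hS /andP[].
apply: le_trans (sup_upper_bound hsS Ss0); by case/andP: (hS _ Ss0).
Qed.

End Trig.
Section LR2.
Variable R : realType.
Implicit Types (a b c d p : R).

Lemma lr_ge0 (r : \bar R) a b : (1 <= r)%E -> 0 <= lrnorm r a b.
Proof.
case: r => [p| |] /= _; first exact: powR_ge0.
  by rewrite le_max normr_ge0.
by [].
Qed.

Lemma lr_sym (r : \bar R) a b : lrnorm r a b = lrnorm r b a.
Proof. case: r => [p| |] /=; [by rewrite addrC | by rewrite maxC | by []]. Qed.

Lemma fin_p1 p : (1 <= p%:E)%E -> 0 < p.
Proof. by rewrite lee_fin => h; apply: lt_le_trans h. Qed.

Lemma lr00 (r : \bar R) : (1 <= r)%E -> lrnorm r 0 0 = 0.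
Proof.
case: r => [p| |] /= hp; last by [].
  have p0 := fin_p1 hp.
  by rewrite normr0 powR0 ?gt_eqF // addr0 powR0 // invr_eq0 gt_eqF.
by rewrite normr0 maxxx.
Qed.

Lemma lr_eq0 (r : \bar R) a b : (1 <= r)%E -> 0 <= a -> 0 <= b ->
  lrnorm r a b = 0 -> a = 0 /\ b = 0.
Proof.
move=> + a0 b0.
case: r => [p| |] /= hp; last by [].
  have p0 := fin_p1 hp.
  by rewrite (ger0_norm a0) (ger0_norm b0); exact: powR_sum_eq0.
rewrite (ger0_norm a0) (ger0_norm b0) => /eqP; rewrite eq_le ge_max.
move=> /andP[/andP[ha hb] _].
by split; apply/eqP; rewrite eq_le ?ha ?hb ?a0 ?b0.
Qed.

Lemma lr_mono (r : \bar R) a b c d : (1 <= r)%E -> 0 <= a -> 0 <= b -> a <= c -> b <= d ->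
  lrnorm r a b <= lrnorm r c d.
Proof.
move=> + a0 b0 ac bd; have c0 := le_trans a0 ac; have d0 := le_trans b0 bd.
case: r => [p| |] /= hp; last by [].
  have p0 := fin_p1 hp.
  rewrite (ger0_norm a0) (ger0_norm b0) (ger0_norm c0) (ger0_norm d0).
  apply: ge0_ler_powR.
  - by rewrite invr_ge0 ltW.
  - by rewrite nnegrE addr_ge0 ?powR_ge0.
  - by rewrite nnegrE addr_ge0 ?powR_ge0.
  by apply: lerD; apply: ge0_ler_powR; rewrite ?nnegrE // ltW.
rewrite (ger0_norm a0) (ger0_norm b0) (ger0_norm c0) (ger0_norm d0).
rewrite ge_max !le_max; apply/andP; split.
  by rewrite ac.
by rewrite bd orbT.
Qed.

Lemma lr_tri (r : \bar R) a b c d : (1 <= r)%E -> 0 <= a -> 0 <= b -> 0 <= c -> 0 <= d ->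
  lrnorm r (a + c) (b + d) <= lrnorm r a b + lrnorm r c d.
Proof.
move=> + a0 b0 c0 d0.
have ac0 := addr_ge0 a0 c0; have bd0 := addr_ge0 b0 d0.
rewrite /lrnorm (ger0_norm a0) (ger0_norm b0) (ger0_norm c0) (ger0_norm d0).
rewrite (ger0_norm ac0) (ger0_norm bd0).
case: r => [p| |] hp; last by [].
  by apply: mink; rewrite // -lee_fin.
rewrite ge_max; apply/andP; split; apply: lerD; rewrite le_max lexx //.
- by rewrite orbT.
- by rewrite orbT.
Qed.

Lemma lr_scale2 (r : \bar R) a b : (1 <= r)%E -> 0 <= a -> 0 <= b ->
  lrnorm r (2 * a) (2 * b) = 2 * lrnorm r a b.
Proof.
move=> + a0 b0.
have a2 : 0 <= 2 * a by rewrite mulr_ge0.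
have b2 : 0 <= 2 * b by rewrite mulr_ge0.
rewrite /lrnorm (ger0_norm a0) (ger0_norm b0) (ger0_norm a2) (ger0_norm b2).
case: r => [p| |] hp; last by rewrite mulr0.
  have p0 := fin_p1 hp.
  rewrite (powRM _ (ler0n _ 2) a0) (powRM _ (ler0n _ 2) b0) -mulrDr.
  rewrite powRM ?powR_ge0 ?addr_ge0 ?powR_ge0 //.
  by rewrite powRK'.
by rewrite maxr_pMr.
Qed.

End LR2.
Section Cones.
Variables (R : realType) (n : nat).
Implicit Types (x y u v : 'rV[R]_n) (P Q T : set 'rV[R]_n).

Lemma cone0 P : nzccone P -> P 0.
Proof.
case=> _ _ hs [x [Px _]].
by have := hs x 0 Px (lexx 0); rewrite scale0r.
Qed.

Lemma enorm_gt0 x : x != 0 -> 0 < enorm x.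
Proof.
move=> x0; rewrite lt_neqAle enorm_ge0 andbT; apply/eqP => e0.
move/eqP: x0; apply; apply: dotp_eq0.
by rewrite -enorm_sqr -e0 expr0n.
Qed.

Lemma normalize_sphere x : x != 0 -> sphere ((enorm x)^-1 *: x).
Proof.
move=> x0; rewrite /sphere /= enormZ ger0_norm ?invr_ge0 ?enorm_ge0 //.
by rewrite mulVf // gt_eqF // enorm_gt0.
Qed.

Lemma coneS_nz P : nzccone P -> (P `&` @sphere R n) !=set0.
Proof.
move=> hP; have [_ _ hs [x [Px x0]]] := hP.
exists ((enorm x)^-1 *: x); split; last exact: normalize_sphere.
by apply: hs; rewrite // invr_ge0 enorm_ge0.
Qed.

Lemma coneS_onS P : onS (P `&` @sphere R n).
Proof. by move=> x []. Qed.

Lemma cone_sub P Q : nzccone P -> nzccone Q -> P `&` @sphere R n `<=` Q -> P `<=` Q.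
Proof.
move=> hP hQ PSQ x Px.
have [->|x0] := eqVneq x 0; first exact: cone0.
have [_ _ hs _] := hQ.
have -> : x = enorm x *: ((enorm x)^-1 *: x).
  by rewrite scalerA mulfV ?scale1r // gt_eqF // enorm_gt0.
apply: hs; last exact: enorm_ge0.
apply: PSQ; split; last exact: normalize_sphere.
by have [_ _ hsP _] := hP; apply: hsP; rewrite // invr_ge0 enorm_ge0.
Qed.

Lemma sphere_enorm_acos x y : sphere x -> sphere y ->
  enorm (x - y) = gf (acos (dotp x y)).
Proof.
move=> hx hy; rewrite gf_acos; last by rewrite sphere_dot_geN1 // sphere_dot_le1.
by rewrite -sphere_dist2 // sqrtr_sqr ger0_norm // enorm_ge0.
Qed.

Lemma acos_dot_range x y : sphere x -> sphere y -> 0 <= acos (dotp x y) <= pi.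
Proof.
move=> hx hy; have h : -1 <= dotp x y <= 1 by rewrite sphere_dot_geN1 // sphere_dot_le1.
by rewrite acos_ge0 // acos_lepi.
Qed.

Lemma Lambda_Theta P Q : nzccone P -> nzccone Q ->
  Lambda (P `&` @sphere R n) (Q `&` @sphere R n) = gf (Theta P Q).
Proof.
move=> hP hQ; rewrite /Lambda /Theta.
pose inner x := inf [set acos (dotp x v) | v in Q `&` @sphere R n].
have Q0 := coneS_nz hQ; have P0 := coneS_nz hP.
have inner_range : forall x, (P `&` @sphere R n) x -> 0 <= inner x <= pi.
  move=> x [_ Sx]; apply: inf_range; first by case: Q0 => v Qv; exists (acos (dotp x v)), v.
  by move=> _ [v [_ Sv] <-]; exact: acos_dot_range.
have E : forall x, (P `&` @sphere R n) x -> distto (Q `&` @sphere R n) x = gf (inner x).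
  move=> x [_ Sx]; rewrite /distto /inner -inf_gf; last first.
  - by move=> _ [v [_ Sv] <-]; exact: acos_dot_range.
  - by case: Q0 => v Qv; exists (acos (dotp x v)), v.
  rewrite image_comp; congr inf; apply: eq_imagel => v [_ Sv] /=.
  exact: sphere_enorm_acos.
rewrite (eq_imagel E) -(image_comp inner (@gf R)) sup_gf //.
  by case: P0 => x Px; exists (inner x), x.
by move=> _ [x Px <-]; exact: inner_range.
Qed.

Lemma Theta_range P Q : nzccone P -> nzccone Q -> 0 <= Theta P Q <= pi.
Proof.
move=> hP hQ; have Q0 := coneS_nz hQ; have P0 := coneS_nz hP.
apply: sup_range; first by case: P0 => x Px; eexists; exists x.
move=> _ [x [_ Sx] <-]; apply: inf_range.
  by case: Q0 => v Qv; exists (acos (dotp x v)), v.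
by move=> _ [v [_ Sv] <-]; exact: acos_dot_range.
Qed.

Lemma Lambda_sin P Q : nzccone P -> nzccone Q ->
  Lambda (P `&` @sphere R n) (Q `&` @sphere R n) = 2 * sin (Theta P Q / 2).
Proof. by move=> hP hQ; rewrite Lambda_Theta // gf_sin // Theta_range. Qed.

Lemma LambdaC_ge0 P Q : nzccone P -> nzccone Q -> 0 <= Lambda (P `&` @sphere R n) (Q `&` @sphere R n).
Proof.
move=> hP hQ; apply: Lambda_ge0; [exact: coneS_nz|exact: coneS_nz|exact: coneS_onS|exact: coneS_onS].
Qed.

End Cones.

Unset Implicit Arguments.

Theorem mainTheorem4 (R : realType) (n : nat) (r : \bar R) (hr : (1 <= r)%E) :
  (* Dis_r is a distance on the nonzero closed convex cones *)
      (forall P Q : set 'rV[R]_n, nzccone P -> nzccone Q -> 0 <= Dis r P Q) /\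
      (forall P Q : set 'rV[R]_n, nzccone P -> nzccone Q ->
         (Dis r P Q = 0 <-> P = Q)) /\
      (forall P Q : set 'rV[R]_n, nzccone P -> nzccone Q ->
         Dis r P Q = Dis r Q P) /\
      (forall P Q T : set 'rV[R]_n, nzccone P -> nzccone Q -> nzccone T ->
         Dis r P T <= Dis r P Q + Dis r Q T) /\
      (* the explicit formula *)
      (forall P Q : set 'rV[R]_n, nzccone P -> nzccone Q ->
         Dis r P Q = 2 * lrnorm r (sin (Theta P Q / 2)) (sin (Theta Q P / 2))) /\
      (* in particular *)
      (forall P Q : set 'rV[R]_n, nzccone P -> nzccone Q ->
         Lambda (P `&` @sphere R n) (Q `&` @sphere R n) = 2 * sin (Theta P Q / 2)).
Proof.
split; first by move=> P Q hP hQ; exact: lr_ge0.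
split.
  move=> P Q hP hQ; split.
    move=> H; have [L1 L2] := lr_eq0 hr (LambdaC_ge0 hP hQ) (LambdaC_ge0 hQ hP) H.
    have [cP _ _ _] := hP; have [cQ _ _ _] := hQ.
    have PQ : P `<=` Q.
      apply: cone_sub => //.
      exact: (Lambda_eq0 (coneS_nz hP) (coneS_nz hQ) (@coneS_onS R n P) (@coneS_onS R n Q)
        (fun x (h : (Q `&` @sphere R n) x) => h.1) cQ L1).
    have QP : Q `<=` P.
      apply: cone_sub => //.
      exact: (Lambda_eq0 (coneS_nz hQ) (coneS_nz hP) (@coneS_onS R n Q) (@coneS_onS R n P)
        (fun x (h : (P `&` @sphere R n) x) => h.1) cP L2).
    by apply/seteqP; split.
  move=> <-; rewrite /Dis /dis Lambda_self ?lr00 //; [exact: coneS_nz | exact: coneS_onS].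
split; first by move=> P Q _ _; rewrite /Dis /dis lr_sym.
split.
  move=> P Q T hP hQ hT; rewrite /Dis /dis.
  have P0 := coneS_nz hP; have Q0 := coneS_nz hQ; have T0 := coneS_nz hT.
  have oP := @coneS_onS R n P; have oQ := @coneS_onS R n Q; have oT := @coneS_onS R n T.
  apply: le_trans (lr_tri _ _ _ _ _) => //; try exact: LambdaC_ge0.
  apply: lr_mono => //; try exact: LambdaC_ge0.
  - exact: Lambda_tri.
  - by rewrite addrC; apply: Lambda_tri.
split.
  move=> P Q hP hQ; rewrite /Dis /dis !Lambda_sin // lr_scale2 //.
  - have := Theta_range hP hQ => /andP[h1 h2]; apply: sin_ge0_pi.
    by apply/andP; split; [rewrite divr_ge0 | have := pi_ge0 R; lra].
  - have := Theta_range hQ hP => /andP[h1 h2]; apply: sin_ge0_pi.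
    by apply/andP; split; [rewrite divr_ge0 | have := pi_ge0 R; lra].
by move=> P Q hP hQ; exact: Lambda_sin.
Qed.
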